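(* There is an absolute constant $d$ such that for every finite simple digraph $H$, every positive integer $k$, and every tournament $T$ that does not contain $k$ pairwise vertex-disjoint topological minor copies of $H$, we have $\mathrm{pw}(T)\le d\,\|H\|\,k$.
   Context: All digraphs are finite and simple; $\|H\|:=|V(H)|+|A(H)|$. A tournament is a simple digraph with exactly one arc between every pair of distinct vertices. A topological minor copy of $H$ in $T$ is a subgraph $\widehat H$ of $T$ together with a map sending vertices of $H$ to distinct vertices of $\widehat H$ and arcs $(u,v)$ of $H$ to directed paths from the image of $u$ to the image of $v$ that are internally vertex-disjoint, avoid images of vertices of $H$ in their interiors, and together cover all arcs and all non-image vertices of $\widehat H$ exactly once. An interval decomposition of a tournament $T$ is a map $I$ assigning to each vertex a nonempty closed interval $[\alpha,\beta]$ with integer endpoints, such that whenever $\max I(u)<\min I(v)$, the arc between $u$ and $v$ is $(u,v)$. Its width is $\max_{\alpha\in\mathbb{Z}}|\{v: \alpha\in I(v)\}|$, and the pathwidth $\mathrm{pw}(T)$ is the minimum width of an interval decomposition of $T$. *)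

(* Defs.v *)
From HB Require Import structures.
From mathcomp Require Import all_boot all_order all_algebra.
From mathcomp Require Import boolp.
Set Implicit Arguments. Unset Strict Implicit. Unset Printing Implicit Defensive.
Import Order.TTheory GRing.Theory Num.Theory.

(* A finite simple digraph is a finType V with an arc relation A : rel V that is
   irreflexive (no loops; a relation has no parallel arcs). *)
Definition simple_digraph (V : finType) (A : rel V) : Prop := irreflexive A.

Definition dg_size (V : finType) (A : rel V) : nat :=
  #|V| + #|[set p : V * V | A p.1 p.2]|.

Definition tournament (V : finType) (E : rel V) : Prop :=
  irreflexive E /\ forall u v : V, u != v -> E u v = ~~ E v u.

(* Topological minor copy of H = (VH, AH) in T = (VT, E): phi sends vertices of H
   to distinct vertices of T; P u v is the sequence of interior vertices of the
   directed path (in T) from phi u to phi v representing the arc (u,v) of H. *)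
Definition topminor_copy (VH : finType) (AH : rel VH) (VT : finType) (E : rel VT)
  (phi : VH -> VT) (P : VH -> VH -> seq VT) : Prop :=
  injective phi /\
  (forall u v, AH u v ->
     [/\ path E (phi u) (rcons (P u v) (phi v)), uniq (P u v) &
         forall w x, w \in P u v -> w != phi x]) /\
  (forall u v u' v', AH u v -> AH u' v' -> (u, v) != (u', v') ->
     forall w, w \in P u v -> w \notin P u' v').

Definition copy_verts (VH : finType) (AH : rel VH) (VT : finType)
  (phi : VH -> VT) (P : VH -> VH -> seq VT) : {set VT} :=
  [set w | [exists x, w == phi x] || [exists p : VH * VH, AH p.1 p.2 && (w \in P p.1 p.2)]].

Definition has_k_disjoint_copies (VH : finType) (AH : rel VH) (VT : finType)
  (E : rel VT) (k : nat) : Prop :=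
  exists (phi : 'I_k -> VH -> VT) (P : 'I_k -> VH -> VH -> seq VT),
    (forall i, topminor_copy AH E (phi i) (P i)) /\
    (forall i j, i != j ->
       [disjoint copy_verts AH (phi i) (P i) & copy_verts AH (phi j) (P j)]).

(* Interval decompositions: I v = (alpha, beta) encodes [alpha, beta]. *)
Definition interval_decomp (VT : finType) (E : rel VT) (I : VT -> int * int) : Prop :=
  (forall v, ((I v).1 <= (I v).2)%R) /\
  (forall u v, ((I u).2 < (I v).1)%R -> E u v).

Definition width_le (VT : finType) (I : VT -> int * int) (w : nat) : Prop :=
  forall alpha : int, #|[set v | ((I v).1 <= alpha)%R && (alpha <= (I v).2)%R]| <= w.

Definition pw_pred (VT : finType) (E : rel VT) : pred nat :=
  fun w => `[< exists I, interval_decomp E I /\ width_le I w >].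

Lemma pw_exists (VT : finType) (E : rel VT) : exists w, pw_pred E w.
Proof.
exists #|VT|; apply/asboolP; exists (fun _ => (0%R, 0%R)); split.
  by split=> // u v; rewrite Order.POrderTheory.ltxx.
by move=> alpha; apply: max_card.
Qed.

Definition pathwidth (VT : finType) (E : rel VT) : nat := ex_minn (pw_exists E).

(* Main.v *)
Require Import Defs.
From mathcomp Require Import all_boot all_order all_algebra.
From mathcomp Require Import zify boolp.

Set Implicit Arguments. Unset Strict Implicit. Unset Printing Implicit Defensive.

Section Tour.
Variables (V : finType) (E : rel V).
Hypothesis tE : tournament E.

Definition indeg (v : V) := #|[set u | E u v]|.
Definition outdeg (v : V) := #|[set u | E v u]|.

Lemma tirr v : E v v = false.
Proof. by case: tE => h _; apply: h. Qed.

Lemma tanti u v : E u v -> E v u = false.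
Proof.
case: tE => hi h huv; case: (eqVneq u v) => [e|nuv]; first by rewrite e hi in huv.
by move: (h _ _ nuv); rewrite huv => /esym/negbTE.
Qed.

Lemma tnot u v : u != v -> ~~ E u v -> E v u.
Proof. by case: tE => _ h nuv; rewrite (h _ _ nuv) negbK. Qed.

Lemma tdeg v : outdeg v + indeg v + 1 = #|V|.
Proof.
have hI : [set u | E v u] :&: [set u | E u v] = set0.
  apply/setP => u; rewrite !inE.
  by case e: (E v u) => //=; rewrite tanti.
have hU : [set u | E v u] :|: [set u | E u v] = [set~ v].
  apply/setP => u; rewrite !inE; case: (eqVneq u v) => [->|nuv] /=.
    by rewrite tirr.
  by case e: (E v u) => //=; apply: tnot; rewrite ?e // eq_sym.
have := cardsUI [set u | E v u] [set u | E u v].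
rewrite hI hU cards0 cardsC1 /outdeg /indeg.
have : 0 < #|V| by apply/card_gt0P; exists v.
lia.
Qed.

Lemma two_paths x y : E y x ->
  indeg y + 1 <= indeg x + #|[set z | E x z && E z y]|.
Proof.
move=> eyx.
have nxy : x != y by apply/eqP => e; rewrite e tirr in eyx.
have hsub : [set z | E x z] :|: [set z | E z y] \subset ~: [set x; y].
  apply/subsetP => z; rewrite !inE; case/orP => e.
    apply/norP; split; apply/eqP => ez; subst z; first by rewrite tirr in e.
    by rewrite tanti in e.
  apply/norP; split; apply/eqP => ez; subst z; last by rewrite tirr in e.
  by rewrite tanti in eyx.
have := subset_leq_card hsub; have := cardsC [set x; y]; rewrite cards2 nxy.
have := cardsUI [set z | E x z] [set z | E z y].
have -> : [set z | E x z] :&: [set z | E z y] = [set z | E x z && E z y].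
  by apply/setP => z; rewrite !inE.
have := tdeg x; rewrite /outdeg /indeg.
lia.
Qed.


Lemma card_sum (Q : {set V}) (P : pred V) :
  #|[set w in Q | P w]| = \sum_(w in Q) (P w : nat).
Proof.
rewrite -sum1_card (eq_bigl (fun w => (w \in Q) && P w)); last by move=> w; rewrite !inE.
by rewrite big_mkcondr /=; apply: eq_bigr => w _; case: (P w).
Qed.

Lemma few_low (Q : {set V}) c :
  (forall v, v \in Q -> #|[set w in Q | E w v]| <= c) -> #|Q| <= 2 * c + 1.
Proof.
move=> hc.
have hper : forall v, v \in Q ->
   #|[set w in Q | E w v]| + #|[set w in Q | E v w]| + 1 = #|Q|.
  move=> v vQ.
  have hI : [set w in Q | E w v] :&: [set w in Q | E v w] = set0.
    apply/setP => u; rewrite !inE.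
    by case: (u \in Q) => //=; case e: (E u v) => //=; rewrite tanti.
  have hU : [set w in Q | E w v] :|: [set w in Q | E v w] = Q :\ v.
    apply/setP => u; rewrite !inE; case: (eqVneq u v) => [->|nuv] /=.
      by rewrite tirr !andbF.
    case uQ : (u \in Q) => //=; case e: (E u v) => //=.
    by apply: tnot; rewrite ?e.
  have := cardsUI [set w in Q | E w v] [set w in Q | E v w].
  rewrite hI hU cards0 (cardsD1 v Q) vQ; lia.
have hsum : \sum_(v in Q) #|[set w in Q | E w v]| + \sum_(v in Q) #|[set w in Q | E v w]|
          + #|Q| = #|Q| * #|Q|.
  rewrite -big_split /= -sum1_card -big_split /=.
  rewrite (eq_bigr (fun _ => #|Q|)); last by move=> v vQ; move: (hper v vQ); lia.
  by rewrite sum_nat_const sum1_card.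
have heq : \sum_(v in Q) #|[set w in Q | E w v]| = \sum_(v in Q) #|[set w in Q | E v w]|.
  rewrite (eq_bigr (fun v => \sum_(w in Q) (E w v : nat))); last by move=> v _; rewrite card_sum.
  rewrite [RHS](eq_bigr (fun v => \sum_(w in Q) (E v w : nat))); last by move=> v _; rewrite card_sum.
  by rewrite exchange_big.
have hle : \sum_(v in Q) #|[set w in Q | E w v]| <= #|Q| * c.
  rewrite -sum_nat_const; apply: leq_sum => v vQ; exact: hc.
move: hsum; rewrite -heq; move: hle.
set S := \sum_(v in Q) _; set q := #|Q|.
case: q => [|q]; first by lia.
nia.
Qed.

End Tour.

Lemma tour_flip (V : finType) (E : rel V) : tournament E -> tournament (fun a b => E b a).
Proof.
case=> hi h; split => [v|u v nuv] /=; first exact: hi.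
by apply: h; rewrite eq_sym.
Qed.

Section Window.
Variables (V : finType) (E : rel V).
Hypothesis tE : tournament E.

Lemma window (t M : nat) (U : {set V}) x y :
  x \in [set v | t <= indeg E v <= t + M] -> y \in [set v | t <= indeg E v <= t + M] ->
  E y x -> 5 * M + 6 * #|U| + 4 <= #|[set v | t <= indeg E v <= t + M]| ->
  (exists z, [/\ z \notin U, E x z & E z y]) \/
  (exists a b, [/\ a \notin U, b \notin U, E x a, E a b & E b y]).
Proof.
set S := [set v | _ <= _ <= _].
move=> xS yS eyx hS.
case: (boolP [exists z, [&& z \notin U, E x z & E z y]]) => [/existsP [z /and3P [h1 h2 h3]]|hz].
  by left; exists z.
case: (boolP [exists a, exists b, [&& a \notin U, b \notin U, E x a, E a b & E b y]]).
  by move=> /existsP [a /existsP [b /and5P [h1 h2 h3 h4 h5]]]; right; exists a, b.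
move=> hab; exfalso.
have nz : forall z, z \notin U -> E x z -> E z y -> False.
  by move=> z h1 h2 h3; move/existsP: hz; apply; exists z; rewrite h1 h2 h3.
have nab : forall a b, a \notin U -> b \notin U -> E x a -> E b y -> E a b -> False.
  move=> a b h1 h2 h3 h5 h4; move/existsP: hab; apply; exists a; apply/existsP; exists b.
  by rewrite h1 h2 h3 h4 h5.
have nxy : x != y by apply/eqP => e; rewrite e (tirr tE) in eyx.
pose A := [set z | E x z]; pose B := [set z | E z y].
pose A0 := A :\: U; pose B0 := B :\: U.
pose R := ~: (A :|: B :|: [set x; y]).
pose Q := A0 :&: S; pose Q' := B0 :&: S.
have h1 : #|A| + indeg E x + 1 = #|V| by exact: tdeg.
have h3 : #|A :&: B| <= #|U|.
  apply: subset_leq_card; apply/subsetP => z; rewrite !inE => /andP [e1 e2].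
  by apply/negPn/negP => zU; apply: (nz z zU e1 e2).
have hAB : A :|: B \subset ~: [set x; y].
  apply/subsetP => z; rewrite !inE; case/orP => e.
    apply/norP; split; apply/eqP => ez; subst z; first by rewrite tirr in e.
    by rewrite tanti in e.
  apply/norP; split; apply/eqP => ez; subst z; last by rewrite tirr in e.
  by rewrite tanti in eyx.
have h4 : #|R| + #|A :|: B| + 2 = #|V|.
  have := cardsC (A :|: B :|: [set x; y]); rewrite -/R.
  have := cardsUI (A :|: B) [set x; y].
  have -> : (A :|: B) :&: [set x; y] = set0.
    apply/setP => z; rewrite !inE; apply/negbTE/negP => /andP [hz1 hz2].
    by move/subsetP: hAB => /(_ z); rewrite !inE hz1 hz2 => /(_ isT).
  by rewrite cards0 cards2 nxy; lia.
have h5 := cardsUI A B.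
have hB0 : #|B| <= #|B0| + #|U|.
  rewrite /B0 cardsD; have : #|B :&: U| <= #|U| by apply/subset_leq_card/subsetIr.
  have : #|B :&: U| <= #|B| by apply/subset_leq_card/subsetIl.
  lia.
have hA0 : #|A| <= #|A0| + #|U|.
  rewrite /A0 cardsD; have : #|A :&: U| <= #|U| by apply/subset_leq_card/subsetIr.
  have : #|A :&: U| <= #|A| by apply/subset_leq_card/subsetIl.
  lia.
have hdis : forall a b, a \in A0 -> b \in B0 -> E b a.
  move=> a b; rewrite !inE => /andP [aU ea] /andP [bU eb].
  apply: (tnot tE); last by apply/negP => e; apply: (nab a b aU bU ea eb e).
  by apply/eqP => e; subst b; apply: (nz a aU ea eb).
have hQ : #|Q| <= 2 * (t + M - #|B0|) + 1.
  apply: (few_low tE) => a aQ.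
  have aA0 : a \in A0 by move: aQ; rewrite inE => /andP [].
  have aS : a \in S by move: aQ; rewrite inE => /andP [].
  have hsub : [set w in Q | E w a] :|: B0 \subset [set u | E u a].
    apply/subsetP => w; rewrite !inE; case/orP; first by case/andP.
    by move=> wB0; apply: hdis => //; rewrite !inE.
  have hI : [set w in Q | E w a] :&: B0 = set0.
    apply/setP => w; rewrite !inE; apply/negbTE.
    case: (boolP (w \in U)) => wU; case ew: (E x w); case ew': (E w y);
      rewrite /= ?andbF ?andbT //; exfalso; exact: (nz w wU ew ew').
  have := subset_leq_card hsub; have := cardsUI [set w in Q | E w a] B0.
  rewrite hI cards0; move: aS; rewrite inE /indeg => /andP [_ ha].
  lia.
have hQ' : #|Q'| <= 2 * ((#|V| - 1 - t) - #|A0|) + 1.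
  apply: (few_low (tour_flip tE)) => b bQ.
  have bB0 : b \in B0 by move: bQ; rewrite inE => /andP [].
  have bS : b \in S by move: bQ; rewrite inE => /andP [].
  have hsub : [set w in Q' | E b w] :|: A0 \subset [set u | E b u].
    apply/subsetP => w; rewrite !inE; case/orP; first by case/andP.
    by move=> wA0; apply: hdis => //; rewrite !inE.
  have hI : [set w in Q' | E b w] :&: A0 = set0.
    apply/setP => w; rewrite !inE; apply/negbTE.
    case: (boolP (w \in U)) => wU; case ew: (E x w); case ew': (E w y);
      rewrite /= ?andbF ?andbT //; exfalso; exact: (nz w wU ew ew').
  have := subset_leq_card hsub; have := cardsUI [set w in Q' | E b w] A0.
  rewrite hI cards0; move: bS; rewrite inE => /andP [hb _].
  have := tdeg tE b; rewrite /outdeg.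
  lia.
have hcov : S \subset [set x; y] :|: U :|: R :|: Q :|: Q'.
  apply/subsetP => v vS; rewrite !in_setU.
  case: (boolP (v \in U)) => vU; first by rewrite !orbT.
  case: (boolP (v \in R)) => vR; first by rewrite !orbT.
  move: vR; rewrite /R in_setC !in_setU negbK => /orP [/orP [vA|vB]|->] //.
    have vQ : v \in Q by rewrite /Q in_setI /A0 in_setD vU vS vA.
    by rewrite vQ !orbT.
  have vQ : v \in Q' by rewrite /Q' in_setI /B0 in_setD vU vS vB.
  by rewrite vQ !orbT.
have hc := subset_leq_card hcov.
have hu1 := (leq_card_setU ([set x; y] :|: U :|: R :|: Q) Q').1.
have hu2 := (leq_card_setU ([set x; y] :|: U :|: R) Q).1.
have hu3 := (leq_card_setU ([set x; y] :|: U) R).1.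
have hu4 := (leq_card_setU [set x; y] U).1.
move: xS yS; rewrite /S !inE => /andP [hx1 hx2] /andP [hy1 hy2].
rewrite cards2 nxy in hu4.
have hBy : #|B| = indeg E y by [].
lia.
Qed.

End Window.

Definition router (V : finType) (E : rel V) (X : {set V}) (B : nat) :=
  forall U : {set V}, #|U| <= B -> forall x y, x \in X -> y \in X -> x != y ->
  exists p : seq V, [/\ size p <= 4, path E x (rcons p y), uniq p &
                        forall w, w \in p -> w \notin U].

Section Routers.
Variables (V : finType) (E : rel V).
Hypothesis tE : tournament E.

Lemma window_router t M B :
  5 * M + 6 * B + 4 <= #|[set v | t <= indeg E v <= t + M]| ->
  router E [set v | t <= indeg E v <= t + M] B.
Proof.
move=> hS U hU x y xS yS nxy.
case exy: (E x y).
  by exists [::]; split => //=; rewrite exy.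
have eyx : E y x by apply: (tnot tE nxy); rewrite exy.
have hS' : 5 * M + 6 * #|U| + 4 <= #|[set v | t <= indeg E v <= t + M]| by lia.
case: (window tE xS yS eyx hS') => [[z [zU e1 e2]]|[a [b [aU bU e1 e2 e3]]]].
  exists [:: z]; split => //=; first by rewrite e1 e2.
  by move=> w; rewrite inE => /eqP ->.
exists [:: a; b]; split => //=; first by rewrite e1 e2 e3.
  rewrite inE andbT; apply/eqP => e; subst b; by rewrite (tirr tE) in e2.
by move=> w; rewrite !inE => /orP [] /eqP ->.
Qed.

Lemma hop s t M (F : {set V}) :
  indeg E s + M < indeg E t -> #|F| <= M + 1 ->
  exists q : seq V, [/\ size q <= 1, path E s (rcons q t) & forall w, w \in q -> w \notin F].
Proof.
move=> hd hF.
have nst : s != t by apply/eqP => e; subst t; lia.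
case est: (E s t); first by exists [::]; split => //=; rewrite est.
have ets : E t s by apply: (tnot tE nst); rewrite est.
have h2 := two_paths tE ets.
set C := [set z | E s z && E z t] in h2.
have : 0 < #|C :\: F|.
  rewrite cardsD; have : #|C :&: F| <= #|F| by apply/subset_leq_card/subsetIr.
  lia.
case/card_gt0P => z; rewrite !inE => /andP [zF /andP [e1 e2]].
exists [:: z]; split => //=; first by rewrite e1 e2.
by move=> w; rewrite inE => /eqP ->.
Qed.

Lemma uniq_small (q : seq V) : size q <= 1 -> uniq q.
Proof. by case: q => [|z [|]]. Qed.

Lemma far_router (X : {set V}) (Lp : {set V * V}) M B :
  (forall p, p \in Lp -> E p.1 p.2) ->
  (forall p x, p \in Lp -> x \in X -> indeg E x + M < indeg E p.1 /\ indeg E p.2 + M < indeg E x) ->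
  {in Lp &, injective fst} -> {in Lp &, injective snd} ->
  2 * B < #|Lp| -> B + 4 <= M -> router E X B.
Proof.
move=> hE hM i1 i2 hL hMB U hU x y xX yX nxy.
pose H1 := [set p in Lp | p.1 \in U]; pose H2 := [set p in Lp | p.2 \in U].
have c1 : #|H1| <= #|U|.
  rewrite -(card_in_imset (f := fst)); last by move=> p q; rewrite !inE => /andP [pL _] /andP [qL _]; apply: i1.
  by apply/subset_leq_card/subsetP => w /imsetP [p]; rewrite inE => /andP [_ ?] ->.
have c2 : #|H2| <= #|U|.
  rewrite -(card_in_imset (f := snd)); last by move=> p q; rewrite !inE => /andP [pL _] /andP [qL _]; apply: i2.
  by apply/subset_leq_card/subsetP => w /imsetP [p]; rewrite inE => /andP [_ ?] ->.
have c3 := (leq_card_setU H1 H2).1.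
have : 0 < #|Lp :\: (H1 :|: H2)|.
  rewrite cardsD; have : #|Lp :&: (H1 :|: H2)| <= #|H1 :|: H2| by apply/subset_leq_card/subsetIr.
  lia.
case/card_gt0P => p; rewrite !inE => /andP [].
case: (boolP (p \in Lp)) => pL; rewrite ?andbF ?andbT ?orbF //= => /norP [uU aU] _.
move: (hE p pL) (hM p x pL xX) (hM p y pL yX).
case: p pL uU aU => u a pL /= uU aU eua [hxu _] [_ hay].
pose F1 := U :|: [set u; a].
have hF1' : #|F1| <= #|U| + 2.
  rewrite /F1; have := (leq_card_setU U [set u; a]).1; have : #|[set u; a]| <= 2 by rewrite cards2; case: (u != a).
  lia.
have hF1 : #|F1| <= M + 1 by lia.
have [q1 [s1 p1 a1]] := hop hxu hF1.
pose F2 := F1 :|: [set w in q1].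
have hF2 : #|F2| <= M + 1.
  have := (leq_card_setU F1 [set w in q1]).1.
  have : #|[set w in q1]| <= 1 by rewrite cardsE; apply: leq_trans (card_size _) s1.
  rewrite /F2; lia.
have [q2 [s2 p2 a2]] := hop hay hF2.
have nua : u != a by apply/eqP => e; subst a; rewrite (tirr tE) in eua.
exists (q1 ++ u :: a :: q2); split.
- by rewrite size_cat /=; lia.
- rewrite rcons_cat /= cat_path; move: p1; rewrite rcons_path => /andP [hp1 hp2]; by rewrite hp1 /= hp2 eua p2.
- rewrite cat_uniq uniq_small //= uniq_small // andbT; apply/and3P; split.
  + apply/negP => /or3P [uq1|aq1|/hasP [w wq2 wq1]].
    * by move: (a1 u uq1); rewrite !inE eqxx !orbT.
    * by move: (a1 a aq1); rewrite !inE eqxx !orbT.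
    * by move: (a2 w wq2); rewrite !inE wq1 !orbT.
  + rewrite inE negb_or nua /=; apply/negP => uq2; move: (a2 u uq2); rewrite !inE eqxx !orbT.
    by [].
  + by apply/negP => aq2; move: (a2 a aq2); rewrite !inE eqxx !orbT.
- move=> w; rewrite mem_cat inE => /orP [wq1|].
    by move: (a1 w wq1); rewrite !inE negb_or => /andP [].
  case/orP => [/eqP -> //|]; rewrite inE => /orP [/eqP -> //| wq2].
  by move: (a2 w wq2); rewrite !inE !negb_or => /andP [/andP []].
Qed.

End Routers.

Section Greedy.
Variables (V : finType) (E : rel V) (X : {set V}) (B : nat).
Hypothesis hr : router E X B.

Lemma greedy (d : V * V) (rs : seq (V * V)) (U0 : {set V}) :
  (forall r, r \in rs -> [/\ r.1 \in X, r.2 \in X & r.1 != r.2]) ->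
  #|U0| + 4 * size rs <= B ->
  exists ps : seq (seq V), [/\ size ps = size rs,
   (forall j, j < size rs ->
      [/\ path E (nth d rs j).1 (rcons (nth [::] ps j) (nth d rs j).2),
          uniq (nth [::] ps j) & forall w, w \in nth [::] ps j -> w \notin U0]) &
   (forall j j', j < size rs -> j' < size rs -> j != j' ->
      forall w, w \in nth [::] ps j -> w \notin nth [::] ps j')].
Proof.
elim: rs U0 => [|r rs IH] U0 hX hB.
  by exists [::]; split.
have [hx hy hne] := hX r (mem_head _ _).
have hU0 : #|U0| <= B by move: hB => /= hB; lia.
have [p [sp pp up ap]] := hr hU0 hx hy hne.
pose U1 := U0 :|: [set w in p].
have hU1 : #|U1| + 4 * size rs <= B.
  have c1 := (leq_card_setU U0 [set w in p]).1.
  have c2 : #|[set w in p]| <= 4 by rewrite cardsE; apply: leq_trans (card_size _) sp.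
  move: hB => /= hB; rewrite /U1; lia.
have hX' : forall r', r' \in rs -> [/\ r'.1 \in X, r'.2 \in X & r'.1 != r'.2].
  by move=> r' r'in; apply: hX; rewrite inE r'in orbT.
have [ps [sps h1 h2]] := IH U1 hX' hU1.
exists (p :: ps); split => /=; first by rewrite sps.
- case=> [|j] /= hj; first by split.
  have [q1 q2 q3] := h1 j hj; split => // w wq; move: (q3 w wq).
  by rewrite !inE negb_or => /andP [].
- case=> [|j] [|j'] //= hj hj' hjj w.
  + move=> wp; have [_ _ q3] := h1 j' hj'.
    by apply/negP => wq; move: (q3 w wq); rewrite !inE wp orbT.
  + move=> wq; have [_ _ q3] := h1 j hj; move: (q3 w wq).
    by rewrite !inE negb_or => /andP [_]; apply: contra.
  + by apply: h2.
Qed.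

End Greedy.

Lemma disjP (T : finType) (A B : {set T}) :
  (forall w, w \in A -> w \in B -> False) -> [disjoint A & B].
Proof.
move=> h; rewrite disjoint_subset; apply/subsetP => w wA; rewrite inE.
by apply/negP; exact: h w wA.
Qed.

Section Embed.
Variables (VH : finType) (AH : rel VH) (VT : finType) (E : rel VT).

Lemma embed k (X : {set VT}) B : simple_digraph AH ->
  k * #|VH| <= #|X| ->
  k * #|VH| + 4 * (k * #|[set p : VH * VH | AH p.1 p.2]|) <= B ->
  router E X B -> has_k_disjoint_copies AH E k.
Proof.
move=> sH hX hB hr.
have hD : #|{: 'I_k * VH}| <= #|X| by rewrite card_prod card_ord.
pose f (p : 'I_k * VH) : VT := enum_val (widen_ord hD (enum_rank p)).
have finj : injective f.
  move=> p q /enum_val_inj /(congr1 val) /= /val_inj /enum_rank_inj; done.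
have fX : forall p, f p \in X by move=> p; apply: enum_valP.
pose phi (i : 'I_k) (h : VH) := f (i, h).
have phinj : forall i j h h', phi i h = phi j h' -> i = j /\ h = h'.
  by move=> i j h h' /finj [-> ->].
pose ArH := [set p : VH * VH | AH p.1 p.2].
pose Ar := setX [set: 'I_k] ArH.
have hAr : #|Ar| = k * #|ArH| by rewrite cardsX cardsT card_ord.
have inAr : forall e, (e \in Ar) = AH e.2.1 e.2.2.
  by case=> i [u v]; rewrite !inE.
pose U0 := f @: setT.
have hU0 : #|U0| <= k * #|VH|.
  by apply: leq_trans (leq_imset_card _ _) _; rewrite cardsT card_prod card_ord.
have fU0 : forall p, f p \in U0 by move=> p; apply: imset_f; rewrite inE.
case: (pickP (@predT VT)) => [x0 _|none]; last first.
  exists (fun i h => phi i h), (fun _ _ _ => [::]); split.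
    move=> i; split; first by move=> h h' /phinj [].
    split; last by [].
    by move=> u v _; have := none (phi i u).
  by move=> i j _; apply: disjP => w; have := none w.
pose er := enum Ar.
pose rs := map (fun e : 'I_k * (VH * VH) => (f (e.1, e.2.1), f (e.1, e.2.2))) er.
have srs : size rs = #|Ar| by rewrite size_map cardE.
have hrs : forall r, r \in rs -> [/\ r.1 \in X, r.2 \in X & r.1 != r.2].
  move=> r /mapP [[i [u v]] ein ->] /=; split; rewrite ?fX //.
  apply/eqP => /finj [] e; subst v.
  by move: ein; rewrite mem_enum inAr /= (sH u).
have hB' : #|U0| + 4 * size rs <= B by move: hB; rewrite srs hAr /ArH => hB; lia.
have [ps [sps h1 h2]] := greedy hr (x0, x0) hrs hB'.
pose g (e : 'I_k * (VH * VH)) := nth [::] ps (index e er).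
have gprop : forall e, e \in Ar ->
   [/\ path E (f (e.1, e.2.1)) (rcons (g e) (f (e.1, e.2.2))),
       uniq (g e) & forall w, w \in g e -> w \notin U0].
  move=> e eAr.
  have ie : index e er < size rs by rewrite size_map index_mem mem_enum.
  have := h1 _ ie; rewrite (nth_map e); last by rewrite size_map in ie.
  by rewrite nth_index ?mem_enum.
have gdisj : forall e e', e \in Ar -> e' \in Ar -> e != e' ->
   forall w, w \in g e -> w \notin g e'.
  move=> e e' eA e'A ne; apply: h2; rewrite ?size_map ?index_mem ?mem_enum //.
  by apply: contra ne => /eqP /(congr1 (nth e er)); rewrite !nth_index ?mem_enum // => ->.
exists phi, (fun i u v => g (i, (u, v))); split.
  move=> i; split; first by move=> h h' /phinj [].
  split.
    move=> u v huv.
    have eA : (i, (u, v)) \in Ar by rewrite inAr.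
    have [q1 q2 q3] := gprop _ eA; split => // w x wg.
    by apply/eqP => e; move: (q3 w wg); rewrite e fU0.
  move=> u v u' v' huv hu'v' ne w wg.
  apply: (gdisj (i, (u, v)) (i, (u', v'))) => //; rewrite ?inAr //.
  by apply: contra ne => /eqP [-> ->].
move=> i j nij; apply: disjP => w; rewrite /copy_verts !inE.
case/orP => [/existsP [x /eqP wx]|/existsP [[u v] /andP [huv wg]]];
case/orP => [/existsP [x' /eqP wx']|/existsP [[u' v'] /andP [hu'v' wg']]].
- by move: nij; rewrite wx in wx'; case: (phinj _ _ _ _ wx') => -> _; rewrite eqxx.
- have [_ _ q3] := gprop (j, (u', v')) ltac:(by rewrite inAr).
  by move: (q3 w wg'); rewrite wx fU0.
- have [_ _ q3] := gprop (i, (u, v)) ltac:(by rewrite inAr).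
  by move: (q3 w wg); rewrite wx' fU0.
- have := gdisj (i, (u, v)) (j, (u', v')); rewrite !inAr => /(_ huv hu'v').
  have ne : (i, (u, v)) != (j, (u', v')) by apply: contra nij => /eqP [-> _ _].
  by move=> /(_ ne w wg); rewrite wg'.
Qed.

End Embed.

Section Decomp.
Variables (V : finType) (E : rel V) (pos : V -> nat).
Hypothesis hpos : forall v, pos v < #|V|.
Variable w : nat.
Hypothesis hsep : forall al, al < #|V| -> exists A B : {set V},
  [/\ A \subset [set v | pos v < al], B \subset [set v | al < pos v],
      (forall a b, a \in A -> b \in B -> E a b) & #|V| <= w + #|A| + #|B|].

Let n := #|V|.

Definition sep al (p : {set V} * {set V}) : bool :=
  [&& p.1 \subset [set v | pos v < al], p.2 \subset [set v | al < pos v] &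
      [forall a in p.1, forall b in p.2, E a b]].

Lemma sepP al p : sep al p ->
  [/\ p.1 \subset [set v | pos v < al], p.2 \subset [set v | al < pos v] &
      forall a b, a \in p.1 -> b \in p.2 -> E a b].
Proof.
case/and3P => h1 h2 /forall_inP h3; split => // a b ha hb.
by move/forall_inP: (h3 a ha) => /(_ b hb).
Qed.

Lemma sepI al (A B : {set V}) :
  A \subset [set v | pos v < al] -> B \subset [set v | al < pos v] ->
  (forall a b, a \in A -> b \in B -> E a b) -> sep al (A, B).
Proof.
move=> h1 h2 h3; apply/and3P; split => //.
by apply/forall_inP => a ha; apply/forall_inP => b hb; apply: h3.
Qed.

Lemma sep0 al : sep al (set0, set0).
Proof. by apply: sepI; rewrite ?sub0set // => a b; rewrite inE. Qed.

Definition score (p : {set V} * {set V}) := (#|p.1| + #|p.2|) * n.+1 + (n - #|p.1|).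

Definition opt al := [arg max_(p > (set0, set0) | sep al p) score p].
Definition AA al := (opt al).1.
Definition BB al := (opt al).2.

Lemma optP al : sep al (opt al) /\ forall q, sep al q -> score q <= score (opt al).
Proof. by rewrite /opt; case: arg_maxnP => [|p hp hmax]; [apply: sep0 | split]. Qed.

Lemma sepAB al : sep al (AA al, BB al).
Proof. by rewrite /AA /BB -surjective_pairing; case: (optP al). Qed.

Lemma cmp al q : sep al q ->
  #|q.1| + #|q.2| <= #|AA al| + #|BB al| /\
  (#|q.1| + #|q.2| = #|AA al| + #|BB al| -> #|AA al| <= #|q.1|).
Proof.
move=> sq; have [_ hm] := optP al; move: (hm q sq); rewrite /score -/(AA al) -/(BB al).
have c1 : #|q.1| <= n by apply: max_card.
have c2 : #|AA al| <= n by apply: max_card.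
set s1 := #|q.1| + #|q.2|; set s2 := #|AA al| + #|BB al|.
move=> h.
have le12 : s1 <= s2.
  case: (leqP s1 s2) => // lt21.
  have := leq_mul lt21 (leqnn n.+1); rewrite mulSn; lia.
split => // e; rewrite e in h; lia.
Qed.

Lemma nest al be : al <= be -> AA al \subset AA be /\ BB be \subset BB al.
Proof.
move=> hab.
have [a1 b1 e1] := sepP (sepAB al).
have [a2 b2 e2] := sepP (sepAB be).
have s1 : sep al (AA al :&: AA be, BB al :|: BB be).
  apply: sepI.
  - by apply: subset_trans (subsetIl _ _) a1.
  - rewrite subUset b1 /=; apply: subset_trans b2 _; apply/subsetP => v; rewrite !inE.
    by move=> h; apply: leq_ltn_trans hab h.
  - move=> a b; rewrite inE in_setU => /andP [ha1 ha2] /orP [hb|hb]; [exact: e1 | exact: e2].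
have s2 : sep be (AA al :|: AA be, BB al :&: BB be).
  apply: sepI.
  - rewrite subUset a2 andbT; apply: subset_trans a1 _; apply/subsetP => v; rewrite !inE.
    by move=> h; apply: leq_trans h hab.
  - by apply: subset_trans (subsetIr _ _) b2.
  - move=> a b; rewrite in_setU inE => /orP [ha|ha] /andP [hb1 hb2]; [exact: e1 | exact: e2].
have [c1 d1] := cmp s1; have [c2 d2] := cmp s2; move: c1 d1 c2 d2 => /= c1 d1 c2 d2.
have u1 := cardsUI (AA al) (AA be); have u2 := cardsUI (BB al) (BB be).
have hA : #|AA al| <= #|AA al :&: AA be| by apply: d1; lia.
have sA : AA al \subset AA be.
  have := subset_leqif_cards (subsetIl (AA al) (AA be)).
  move=> [_]; rewrite eqn_leq hA (subset_leq_card (subsetIl _ _)) /= => /esym /eqP e.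
  by rewrite -e subsetIr.
split => //.
have eU : AA al :|: AA be = AA be by apply/setUidPr.
have hB : #|BB al :&: BB be| = #|BB be|.
  rewrite eU in c2; have := subset_leq_card (subsetIr (BB al) (BB be)). lia.
have := subset_leqif_cards (subsetIr (BB al) (BB be)).
move=> [_]; rewrite hB eqxx => /esym /eqP e.
by rewrite -e subsetIl.
Qed.

Lemma lv_ex v : exists al, v \notin BB al.
Proof.
exists (pos v); have [_ b _] := sepP (sepAB (pos v)).
by apply/negP => /(subsetP b); rewrite inE ltnn.
Qed.

Lemma rv_ex v : exists al, (al < n) && (v \notin AA al).
Proof.
exists (pos v); rewrite hpos /=; have [a _ _] := sepP (sepAB (pos v)).
by apply/negP => /(subsetP a); rewrite inE ltnn.
Qed.

Lemma rv_ub v : forall al, (al < n) && (v \notin AA al) -> al <= n.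
Proof. by move=> al /andP [h _]; apply: ltnW. Qed.

Definition lv v := ex_minn (lv_ex v).
Definition rv v := ex_maxn (rv_ex v) (@rv_ub v).

Lemma lvP v : [/\ v \notin BB (lv v), lv v <= pos v & forall al, al < lv v -> v \in BB al].
Proof.
rewrite /lv; case: ex_minnP => m hm hmin; split => //.
  apply: hmin; have [_ b _] := sepP (sepAB (pos v)).
  by apply/negP => /(subsetP b); rewrite inE ltnn.
move=> al hal; apply/negPn/negP => h; have := hmin al h; lia.
Qed.

Lemma rvP v : [/\ v \notin AA (rv v), rv v < n, pos v <= rv v &
   forall al, rv v < al -> al < n -> v \in AA al].
Proof.
rewrite /rv; case: ex_maxnP => m /andP [hm1 hm2] hmax; split => //.
  apply: hmax; rewrite hpos /=; have [a _ _] := sepP (sepAB (pos v)).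
  by apply/negP => /(subsetP a); rewrite inE ltnn.
move=> al h1 h2; apply/negPn/negP => h; have := hmax al; rewrite h2 h => /(_ isT); lia.
Qed.

Lemma notB v al : lv v <= al -> v \notin BB al.
Proof.
move=> h; have [h1 _ _] := lvP v; have [_ s] := nest h.
by apply: contra h1; apply/subsetP.
Qed.

Lemma notA v al : al <= rv v -> v \notin AA al.
Proof.
move=> h; have [h1 _ _ _] := rvP v; have [s _] := nest h.
by apply: contra h1; apply/subsetP.
Qed.

Definition Idec v : int * int := (Posz (2 * lv v), Posz (2 * rv v + 2)).

Lemma Idec_ok : interval_decomp E Idec.
Proof.
split.
  move=> v; rewrite /Idec /= lez_nat; have [_ h _] := lvP v; have [_ _ h' _] := rvP v; lia.
move=> u v; rewrite /Idec /= ltz_nat => h.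
have [_ lvp _] := lvP v; have := hpos v => hv.
have [_ _ _ hA] := rvP u; have [_ _ hB] := lvP v.
have [_ _ e] := sepP (sepAB (rv u).+1).
apply: e; first by apply: hA; lia.
by apply: hB; lia.
Qed.

Lemma Sq_card be : #|[set v | lv v <= be <= rv v]| <= w.
Proof.
case: (ltnP be n) => hb; last first.
  rewrite (_ : [set v | _] = set0) ?cards0 //; apply/setP => v; rewrite !inE.
  by have [_ h _ _] := rvP v; apply/negbTE; rewrite negb_and -!ltnNge; apply/orP; right; lia.
have [A [B [hA hB hE hn]]] := hsep hb.
have sq : sep be (A, B) by apply: sepI.
have [c _] := cmp sq; move: c => /= c.
have [a b _] := sepP (sepAB be); move: a b => /= a b.
have hI : AA be :&: BB be = set0.
  apply/setP => v; rewrite !inE; apply/negbTE/negP => /andP [h1 h2].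
  by move: (subsetP a v h1) (subsetP b v h2); rewrite !inE; lia.
have u := cardsUI (AA be) (BB be); rewrite hI cards0 in u.
have cc := cardsC (AA be :|: BB be).
have sub : [set v | lv v <= be <= rv v] \subset ~: (AA be :|: BB be).
  apply/subsetP => v; rewrite !inE => /andP [h1 h2].
  by rewrite negb_or notA // notB.
have := subset_leq_card sub; rewrite /n in hb c *; lia.
Qed.

Lemma Idec_width : width_le Idec (2 * w).
Proof.
case=> [m|m].
  rewrite /Idec /=.
  have sub : [set v | (Posz (2 * lv v) <= Posz m)%R && (Posz m <= Posz (2 * rv v + 2))%R]
     \subset [set v | lv v <= m %/ 2 <= rv v] :|: [set v | lv v <= (m %/ 2).-1 <= rv v].
    apply/subsetP => v; rewrite !inE !lez_nat => /andP [h1 h2].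
    have [_ lp _] := lvP v; have [_ _ rp _] := rvP v.
    case: (leqP (m %/ 2) (rv v)) => h3.
      apply/orP; left; apply/andP; split => //; rewrite leq_divRL //; lia.
    apply/orP; right; apply/andP; split; lia.
  apply: leq_trans (subset_leq_card sub) _.
  apply: leq_trans (leq_card_setU _ _).1 _.
  by have := Sq_card (m %/ 2); have := Sq_card (m %/ 2).-1; lia.
rewrite (_ : [set v | _] = set0) ?cards0 //; apply/setP => v; rewrite !inE.
Qed.

Lemma pw_le : pathwidth E <= 2 * w.
Proof.
rewrite /pathwidth; case: ex_minnP => m hm hmin; apply: hmin.
by apply/asboolP; exists Idec; split; [apply: Idec_ok | apply: Idec_width].
Qed.

End Decomp.

Section Pos.
Variables (V : finType) (E : rel V) (x0 : V).

Definition srt := sort (fun u v => indeg E u <= indeg E v) (enum V).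
Definition pos v := index v srt.

Lemma srt_size : size srt = #|V|.
Proof. by rewrite /srt size_sort cardE. Qed.

Lemma srt_uniq : uniq srt.
Proof. by rewrite /srt sort_uniq enum_uniq. Qed.

Lemma srt_mem v : v \in srt.
Proof. by rewrite /srt mem_sort mem_enum. Qed.

Lemma pos_lt v : pos v < #|V|.
Proof. by rewrite /pos -srt_size index_mem srt_mem. Qed.

Lemma nth_pos v : nth x0 srt (pos v) = v.
Proof. by rewrite /pos nth_index // srt_mem. Qed.

Lemma pos_nth i : i < #|V| -> pos (nth x0 srt i) = i.
Proof. by move=> hi; rewrite /pos index_uniq // ?srt_uniq // srt_size. Qed.

Lemma pos_mono u v : pos u <= pos v -> indeg E u <= indeg E v.
Proof.
move=> h.
have so : sorted (fun u v => indeg E u <= indeg E v) srt.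
  by apply: sort_sorted => a b; apply: leq_total.
have tr : transitive (fun u v => indeg E u <= indeg E v) by move=> a b c; apply: leq_trans.
have rf : reflexive (fun u v => indeg E u <= indeg E v) by move=> a.
have := sorted_leq_nth tr rf x0 so.
move=> /(_ (pos u) (pos v)); rewrite !inE srt_size !pos_lt !nth_pos; apply => //.
Qed.



Lemma range_le lo hi : #|[set v | lo <= pos v < hi]| <= hi - lo.
Proof.
pose g (i : 'I_(hi - lo)) := nth x0 srt (lo + i).
have sub : [set v | lo <= pos v < hi] \subset g @: setT.
  apply/subsetP => v; rewrite inE => /andP [h1 h2].
  have hi' : pos v - lo < hi - lo by lia.
  apply/imsetP; exists (Ordinal hi'); rewrite ?inE //= /g.
  by rewrite subnKC // nth_pos.
apply: leq_trans (subset_leq_card sub) _.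
by apply: leq_trans (leq_imset_card _ _) _; rewrite cardsT card_ord.
Qed.

Lemma range_eq lo hi : lo <= hi -> hi <= #|V| -> #|[set v | lo <= pos v < hi]| = hi - lo.
Proof.
move=> h1 h2; apply/eqP; rewrite eqn_leq range_le /=.
pose g (i : 'I_(hi - lo)) := nth x0 srt (lo + i).
have pg : forall i : 'I_(hi - lo), pos (g i) = lo + i.
  by move=> i; rewrite /g pos_nth //; have := ltn_ord i; lia.
have sub : g @: setT \subset [set v | lo <= pos v < hi].
  apply/subsetP => v /imsetP [i _ ->]; rewrite inE pg; have := ltn_ord i; lia.
apply: leq_trans (subset_leq_card sub).
rewrite card_imset ?cardsT ?card_ord //.
by move=> i j /(congr1 pos); rewrite !pg => /eqP; rewrite eqn_add2l => /eqP /val_inj.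
Qed.

End Pos.

Lemma arith1 (x1 x2 y1 y2 p r al n : nat) : x2 <= y2 ->
  x1 <= y1 -> y1 <= p -> y2 <= p -> p < r ->
  al < n -> n <= 2 * r + (al - x1) + (n - al.+1 - x2).
Proof. move=> *; lia. Qed.

Section Main.
Variables (VH : finType) (AH : rel VH) (V : finType) (E : rel V).
Hypotheses (sH : simple_digraph AH) (tE : tournament E).
Variable k : nat.
Hypothesis nc : ~ has_k_disjoint_copies AH E k.

Definition BB0 := k * #|VH| + 4 * (k * #|[set p : VH * VH | AH p.1 p.2]|).
Definition MM0 := BB0 + 4.
Definition KK0 := 5 * MM0 + 6 * BB0 + 3.
Definition NN0 := k * #|VH|.
Definition RR0 := 2 * BB0 + 1 + NN0 + 2 * KK0.

Lemma no_heavy t : #|[set v | t <= indeg E v <= t + MM0]| <= KK0.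
Proof.
rewrite leqNgt; apply/negP => h; apply: nc.
apply: (embed (X := [set v | t <= indeg E v <= t + MM0]) (B := BB0) sH).
- by move: h; rewrite /KK0 /BB0 /MM0; lia.
- by rewrite /BB0.
- by apply: window_router => //; move: h; rewrite /KK0; lia.
Qed.

Lemma margin (x0 : V) u v : pos E v + KK0 < pos E u -> indeg E v + MM0 < indeg E u.
Proof.
move=> h; rewrite ltnNge; apply/negP => h'.
have sub : [set z | pos E v <= pos E z < (pos E u).+1] \subset
           [set z | indeg E v <= indeg E z <= indeg E v + MM0].
  apply/subsetP => z; rewrite !inE => /andP [h1 h2].
  rewrite (pos_mono x0 h1) /=; apply: leq_trans h'; exact: (pos_mono x0 h2).
have := subset_leq_card sub; rewrite (range_eq E x0); last by apply: pos_lt.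
  by have := no_heavy (indeg E v); lia.
lia.
Qed.


Lemma pw_main : pathwidth E <= 2 * (2 * RR0).
Proof.
case: (pickP (@predT V)) => [x0 _|none]; last first.
  have n0 : #|V| = 0 by apply: eq_card0 => v; have := none v.
  apply: (pw_le (pos := fun _ => 0)) => [v|al]; rewrite n0 //.
  by have := none v.
apply: (pw_le (pos_lt E)) => al hal.
pose Mt (P : {set V * V}) :=
  [forall p in P, [&& E p.1 p.2, pos E p.2 < al & al < pos E p.1]] &&
  [forall p in P, forall q in P, (p != q) ==> (p.1 != q.1) && (p.2 != q.2)].
have Mt0 : Mt set0.
  by apply/andP; split; apply/forall_inP => p; rewrite inE.
pose P := [arg max_(P > set0 | Mt P) #|P|].
have [MtP Pmax] : Mt P /\ forall Q, Mt Q -> #|Q| <= #|P|.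
  by rewrite /P; case: arg_maxnP => // Q hQ hmax; split.
have hP1 : forall p, p \in P -> [/\ E p.1 p.2, pos E p.2 < al & al < pos E p.1].
  by move=> p pP; case/andP: MtP => /forall_inP /(_ p pP) /and3P [].
have hP2 : forall p q, p \in P -> q \in P -> p != q -> p.1 != q.1 /\ p.2 != q.2.
  move=> p q pP qP ne; case/andP: MtP => _ /forall_inP /(_ p pP) /forall_inP /(_ q qP).
  by rewrite ne => /andP.
have i1 : {in P &, injective fst}.
  move=> p q pP qP e; apply/eqP; apply/negP => /negP ne.
  by have [] := hP2 p q pP qP ne; rewrite e eqxx.
have i2 : {in P &, injective snd}.
  move=> p q pP qP e; apply/eqP; apply/negP => /negP ne.
  by have [] := hP2 p q pP qP ne; rewrite e eqxx.
have cover : forall u a, E u a -> pos E a < al -> al < pos E u ->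
    (u \in fst @: P) || (a \in snd @: P).
  move=> u a eua ha hu; apply/negPn/negP; rewrite negb_or => /andP [nu na].
  have nP : (u, a) \notin P by apply: contra nu => h; apply/imsetP; exists (u, a).
  have : Mt ((u, a) |: P).
    apply/andP; split.
      apply/forall_inP => p; rewrite in_setU1 => /orP [/eqP -> /=|pP].
        by rewrite eua ha hu.
      by apply/and3P; apply: hP1.
    apply/forall_inP => p pQ; apply/forall_inP => q qQ; apply/implyP => ne.
    move: pQ qQ; rewrite !in_setU1 => /orP [/eqP ep|pP] /orP [/eqP eq|qP].
    - by rewrite ep eq eqxx in ne.
    - subst p; apply/andP; split; apply/negP => /eqP /= e.
        by move: nu; rewrite e; case/negP; apply/imsetP; exists q.
      by move: na; rewrite e; case/negP; apply/imsetP; exists q.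
    - subst q; apply/andP; split; apply/negP => /eqP /= e.
        by move: nu; rewrite -e; case/negP; apply/imsetP; exists p.
      by move: na; rewrite -e; case/negP; apply/imsetP; exists p.
    - by have [-> ->] := hP2 p q pP qP ne.
  move/Pmax; rewrite cardsU1 nP; lia.
case: (ltnP #|P| RR0) => hR.
  exists ([set v | pos E v < al] :\: snd @: P), ([set v | al < pos E v] :\: fst @: P).
  split; [exact: subsetDl | exact: subsetDl | |].
    move=> a b; rewrite !inE => /andP [na ha] /andP [nb hb].
    have nab : a != b by apply/eqP => e; subst b; lia.
    case eab: (E a b) => //; have eba : E b a by apply: (tnot tE nab); rewrite eab.
    by move: (cover b a eba ha hb); rewrite (negbTE na) (negbTE nb).
  have cL : #|[set v | pos E v < al]| = al.
    have -> : [set v | pos E v < al] = [set v | 0 <= pos E v < al] by apply/setP => v; rewrite !inE.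
    by rewrite (range_eq E x0) ?subn0 //; apply: ltnW.
  have cR : #|[set v | al < pos E v]| = #|V| - al.+1.
    have -> : [set v | al < pos E v] = [set v | al.+1 <= pos E v < #|V|].
      by apply/setP => v; rewrite !inE pos_lt andbT.
    by rewrite (range_eq E x0).
  rewrite !cardsD.
  have := leq_imset_card fst P; have := leq_imset_card snd P.
  have := subset_leq_card (subsetIr [set v | pos E v < al] (snd @: P)).
  have := subset_leq_card (subsetIr [set v | al < pos E v] (fst @: P)).
  rewrite cL cR => c1 c2 c3 c4.
  move: c1 c2 c3 c4 hR hal.
  set x1 := #|_ :&: [set x.2 | x in P]|; set x2 := #|_ :&: [set x.1 | x in P]|.
  set y1 := #|[set x.2 | x in P]|; set y2 := #|[set x.1 | x in P]|.
  move=> c1' c2' c3' c4' h1' h2'; exact: (arith1 c1' c2' c3' c4' h1' h2').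
exfalso; apply: nc.
pose Lp := [set p in P | (pos E p.2 + NN0 + KK0 < al) && (al + KK0 < pos E p.1)].
pose P1 := [set p in P | al <= pos E p.2 + NN0 + KK0].
pose P2 := [set p in P | pos E p.1 <= al + KK0].
have cP1 : #|P1| <= NN0 + KK0.
  rewrite -(card_in_imset (f := snd)); last by move=> p q; rewrite /P1 !inE => /andP [pP _] /andP [qP _]; apply: i2.
  have sub : snd @: P1 \subset [set v | al - (NN0 + KK0) <= pos E v < al].
    apply/subsetP => v /imsetP [p pX ->]; move: pX; rewrite /P1 !inE => /andP [pP h].
    by have [_ h2 _] := hP1 p pP; apply/andP; split; lia.
  by apply: leq_trans (subset_leq_card sub) _; apply: leq_trans (range_le E x0 _ _) _; lia.
have cP2 : #|P2| <= KK0.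
  rewrite -(card_in_imset (f := fst)); last by move=> p q; rewrite /P2 !inE => /andP [pP _] /andP [qP _]; apply: i1.
  have sub : fst @: P2 \subset [set v | al.+1 <= pos E v < (al + KK0).+1].
    apply/subsetP => v /imsetP [p pX ->]; move: pX; rewrite /P2 !inE => /andP [pP h].
    by have [_ _ h3] := hP1 p pP; apply/andP; split; lia.
  by apply: leq_trans (subset_leq_card sub) _; apply: leq_trans (range_le E x0 _ _) _; lia.
have cov : P \subset Lp :|: P1 :|: P2.
  apply/subsetP => p pP; rewrite !inE pP /=.
  by case: (ltnP (pos E p.2 + NN0 + KK0) al); case: (ltnP (al + KK0) (pos E p.1)).
have cLp : 2 * BB0 < #|Lp|.
  have := subset_leq_card cov.
  have := (leq_card_setU (Lp :|: P1) P2).1; have := (leq_card_setU Lp P1).1.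
  move: hR; rewrite /RR0; lia.
have [p0 p0L] : exists p0, p0 \in Lp.
  by apply/set0Pn; apply/negP => /eqP e; rewrite e cards0 in cLp.
have hal0 : NN0 + KK0 < al by move: p0L; rewrite inE => /andP [_ /andP [h _]]; lia.
pose X := [set v | al - NN0 <= pos E v < al].
have cX : #|X| = NN0 by rewrite /X (range_eq E x0) //; lia.
apply: (embed (X := X) (B := BB0) sH).
- by rewrite cX.
- by rewrite /BB0.
apply: (far_router (Lp := Lp) (M := MM0) tE).
- by move=> p; rewrite inE => /andP [pP _]; have [] := hP1 p pP.
- move=> p x; rewrite !inE => /andP [pP /andP [h1 h2]] /andP [hx1 hx2]; split.
    by apply: (margin x0); lia.
  by apply: (margin x0); lia.
- by move=> p q; rewrite !inE => /andP [pP _] /andP [qP _]; apply: i1.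
- by move=> p q; rewrite !inE => /andP [pP _] /andP [qP _]; apply: i2.
- exact: cLp.
- by rewrite /MM0.
Qed.

End Main.

Theorem corollary10 :
  exists d : nat,
    forall (VH : finType) (AH : rel VH), simple_digraph AH ->
    forall k : nat, 0 < k ->
    forall (VT : finType) (E : rel VT), tournament E ->
      ~ has_k_disjoint_copies AH E k ->
      pathwidth E <= d * dg_size AH * k.
Proof.
exists 600 => VH AH sH k hk VT E tE nc.
have cA : #|[set p : VH * VH | AH p.1 p.2]| <= #|VH| * #|VH|.
  by rewrite -card_prod; apply: max_card.
case: (posnP #|VH|) => hV.
  exfalso; apply: nc; apply: (embed (X := set0) (B := 0) sH).
  - by rewrite hV muln0.
  - by rewrite hV in cA; move: cA; rewrite muln0 leqn0 => /eqP ->; rewrite hV !muln0.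
  - by move=> U _ x y; rewrite inE.
apply: leq_trans (pw_main sH tE nc) _.
rewrite /RR0 /KK0 /MM0 /BB0 /NN0 /dg_size.
have : 0 < k * #|VH| by rewrite muln_gt0 hk hV.
set a := #|VH|; set b := #|[set p : VH * VH | AH p.1 p.2]|.
move=> hkV; nia.
Qed.
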